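(* Let $G$ be a directed graph, and let $p\ge 2$ and $r\ge 1$ be integers. If $G$ is $p$-solvable, then the lexicographic product $(G,r)$ is $pr$-solvable.
   Context: All graphs are finite. A directed graph $D=(V,E)$ has arcs $E \subseteq \{(u,v)\in V^2 : u \neq v\}$; bidirectional pairs are allowed. An undirected graph is identified with the directed graph having both arcs $(u,v)$ and $(v,u)$ for each edge $\{u,v\}$. The in-neighbourhood of $v$ is $N^-(v)=\{u : (u,v)\in E\}$. For an integer $q\ge 2$ let $[q]=\{0,1,\dots,q-1\}$. A $D$-function over $[q]$ is a map $f=(f_v)_{v\in V}:[q]^V\to[q]^V$ such that each $f_v(x)$ depends only on $(x_u)_{u\in N^-(v)}$. The graph $D$ is $q$-solvable if there is a $D$-function $f$ over $[q]$ such that for every $x\in[q]^V$ there exists a vertex $v$ with $f_v(x)=x_v$. The lexicographic product $(D,r)$ of a directed graph $D=(V,E)$ with the clique $K_r$ is the directed graph with vertex set $V\times\{0,\dots,r-1\}$ in which $((u,a),(v,b))$ is an arc if and only if either $(u,v)\in E$, or $u=v$ and $a\ne b$. *)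

(* Defs.v *)
From mathcomp Require Import all_boot.
Set Implicit Arguments. Unset Strict Implicit. Unset Printing Implicit Defensive.

(* A directed graph is a finite vertex type V with arc relation E : rel V
   (E u v means (u,v) is an arc); loops are excluded by requiring
   [irreflexive E] in statements. *)

Definition is_D_function (V : finType) (E : rel V) (q : nat)
  (f : {ffun V -> 'I_q} -> {ffun V -> 'I_q}) : Prop :=
  forall (v : V) (x y : {ffun V -> 'I_q}),
    (forall u : V, E u v -> x u = y u) -> f x v = f y v.

Definition solvable (V : finType) (E : rel V) (q : nat) : Prop :=
  exists f : {ffun V -> 'I_q} -> {ffun V -> 'I_q},
    is_D_function E f /\
    forall x : {ffun V -> 'I_q}, exists v : V, f x v = x v.

(* Lexicographic product (D, r) of D with the clique K_r. *)
Definition lex_prod (V : finType) (E : rel V) (r : nat) : rel (V * 'I_r) :=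
  fun a b => E a.1 b.1 || ((a.1 == b.1) && (a.2 != b.2)).
Arguments lex_prod [V] E r.
Arguments solvable [V] E q.

(* Main.v *)
Require Import Defs.
From mathcomp Require Import all_boot.
From mathcomp Require Import zify.
Set Implicit Arguments.

Lemma arith a q t r : t <= r -> r - t + (a + (q*r + t)) = a + q.+1*r.
Proof. rewrite mulSn. lia. Qed.

Lemma pair_lt p r a b : a < p -> b < r -> a * r + b < p * r.
Proof.
move=> ha hb. have: a.+1 * r <= p * r by rewrite leq_mul2r ha orbT.
rewrite mulSn => h. apply: leq_trans h. by rewrite [r + _]addnC ltn_add2l.
Qed.

Section S.
Variables (V : finType) (E : rel V) (p r : nat).
Hypothesis hr : 0 < r.
Hypothesis hp : 0 < p.
Notation X := {ffun V * 'I_r -> 'I_(p*r)}.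

Definition lo (x : X) w := (x w : nat) %% r.
Definition hi (x : X) w := (x w : nat) %/ r.

Lemma hhi x w : hi x w < p.
Proof. by rewrite /hi ltn_divLR // ltn_ord. Qed.

Definition cc (x : X) v : 'I_r := Ordinal (ltn_pmod (\sum_(j < r) lo x (v,j)) hr).
Definition yy (x : X) : {ffun V -> 'I_p} := [ffun v => Ordinal (hhi x (v, cc x v))].
Definition TT (x : X) v (i : 'I_r) := \sum_(j < r | j != i) lo x (v,j).
Definition bb (x : X) v (i : 'I_r) := (i + (r - TT x v i %% r)) %% r.
Lemma hbb x v i : bb x v i < r. Proof. exact: ltn_pmod. Qed.

Definition FF (f : {ffun V -> 'I_p} -> {ffun V -> 'I_p}) (x : X) : X :=
  [ffun w => Ordinal (@pair_lt _ _ _ _ (ltn_ord (f (yy x) w.1)) (hbb x w.1 w.2))].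

End S.

Theorem lemma2 (V : finType) (E : rel V) (p r : nat) :
  irreflexive E -> 2 <= p -> 1 <= r ->
  solvable E p -> solvable (lex_prod E r) (p * r).
Proof.
move=> irrE hp2 hr [f [fD fS]].
have hp : 0 < p by apply: leq_trans hp2.
exists (FF hr f); split.
- move=> [v i] x x' H. rewrite !ffunE; apply: val_inj => /=.
  have Ey : forall u, E u v -> yy p hr x u = yy p hr x' u.
    move=> u Euv. rewrite !ffunE. apply: val_inj => /=.
    have Hu : forall j, x (u,j) = x' (u,j).
      by move=> j; apply: H; rewrite /lex_prod /= Euv.
    have -> : cc p hr x u = cc p hr x' u.
      apply: val_inj => /=; congr (_ %% _); apply: eq_bigr => j _.
      by rewrite /lo Hu.
    by rewrite /hi Hu.
  rewrite (fD v _ _ Ey).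
  congr (_ + _). rewrite /bb /TT. congr (_ %% _). congr (_ + (_ - _ %% _)).
  apply: eq_bigr => j ji. rewrite /lo H //= /lex_prod /= eqxx /=.
  by rewrite ji orbT.
- move=> x. have [v Hv] := fS (yy p hr x).
  exists (v, cc p hr x v). rewrite ffunE; apply: val_inj => /=.
  rewrite Hv ffunE /=.
  have -> : bb p x v (cc p hr x v) = lo p x (v, cc p hr x v).
    rewrite /bb /TT /=.
    rewrite (bigD1 (cc p hr x v)) //= addnC.
    set T := \sum_(j < r | j != _) _.
    set l := lo p x _.
    have hl : l < r by rewrite /l /lo ltn_pmod.
    rewrite modnDml modnDmr.
    have hT : T %% r < r by rewrite ltn_pmod.
    rewrite {2}(divn_eq T r).
    have -> : r - T %% r + (x (v, cc p hr x v) + (T %/ r * r + T %% r))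
       = x (v, cc p hr x v) + (T %/ r).+1 * r.
      by apply: arith; exact: ltnW.
    by rewrite addnC modnMDl.
  rewrite /hi /lo. by rewrite -divn_eq.
Qed.
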